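(* Let $n,q$ be positive integers. For any $\kappa_1,\kappa_2\in\{0,1,\ldots,q-1\}^n$ with $\kappa_1\neq\kappa_2$, there exists a word $w\in\{x,y\}^*$ such that $f(g(\kappa_1)w)=0$ and $f(g(\kappa_2)w)\neq 0$.
   Context: Fix positive integers $n,q$. Define $f:\{x,y\}^*\to\{0,1,\ldots,q-1\}$ as follows: for $w\in\{x,y\}^*$, if $w$ has at most $n$ occurrences of the letter $x$, let $w'=w$; otherwise take the $(n+1)$-st occurrence of $x$ counted from the right end of $w$, erase it and everything to its left, and let $w'$ be the remaining word. Then $f(w)$ is the number of occurrences of $y$ in $w'$, taken modulo $q$. Define $g:\{0,1,\ldots,q-1\}^n\to\{x,y\}^*$ by $g(i_1,i_2,\ldots,i_n)=x y^{i_1} x y^{i_2}\cdots x y^{i_n}$. *)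

(* Defs.v *)
From HB Require Import structures.
From mathcomp Require Import all_boot.
Set Implicit Arguments. Unset Strict Implicit. Unset Printing Implicit Defensive.

Inductive letter := lx | ly.
Definition letter_eqb (a b : letter) : bool :=
  match a, b with lx, lx | ly, ly => true | _, _ => false end.
Lemma letter_eqP : Equality.axiom letter_eqb.
Proof. by case; case; constructor. Qed.
HB.instance Definition _ := hasDecEq.Build letter letter_eqP.

Definition word := seq letter.

Fixpoint keep_right (k : nat) (s : word) : word :=
  match s with
  | [::] => [::]
  | lx :: s' => if k is k'.+1 then lx :: keep_right k' s' else [::]
  | ly :: s' => ly :: keep_right k s'
  end.

(* w' : if w has at most n x's, w itself; otherwise the part of w strictly to
   the right of the (n+1)-st occurrence of x counted from the right end. *)
Definition wprime (n : nat) (w : word) : word := rev (keep_right n (rev w)).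

Definition f (n q : nat) (w : word) : nat := count_mem ly (wprime n w) %% q.

Definition g (n q : nat) (k : n.-tuple 'I_q) : word :=
  flatten [seq lx :: nseq (nat_of_ord i) ly | i <- k].

(* Main.v *)
Require Import Defs.
From mathcomp Require Import all_boot zify.

Definition H (l : seq nat) : word := flatten [seq nseq i ly ++ [:: lx] | i <- l].

Lemma keep_nseq_y t r s : keep_right t (nseq r ly ++ s) = nseq r ly ++ keep_right t s.
Proof. by elim: r => //= r ->. Qed.

Lemma keep_nseq_x t m s : m <= t -> keep_right t (nseq m lx ++ s) = nseq m lx ++ keep_right (t - m) s.
Proof. elim: m t => [|m IH] [|t] //= h; by rewrite ?subn0 ?IH. Qed.

Lemma count_H t l : count_mem ly (keep_right t (H l)) = sumn (take t.+1 l).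
Proof.
elim: l t => [|i l IH] t /=; first by [].
rewrite /H /= -catA keep_nseq_y count_cat count_nseq /= mul1n.
case: t => [|t] /=; first by rewrite take0.
by rewrite add0n -IH.
Qed.

Lemma rev_g n q (k : n.-tuple 'I_q) : rev (g k) = H (rev (map val k)).
Proof.
rewrite /g /H; elim: (tval k) => [|i s IH] //=.
by rewrite rev_cons rev_cat IH rev_cons map_rcons flatten_rcons rev_nseq -cats1 catA.
Qed.

Lemma f_formula n q (k : n.-tuple 'I_q) m r : m <= n ->
  f n q (g k ++ nseq m lx ++ nseq r ly) = (r + sumn (take (n - m).+1 (rev (map val k)))) %% q.
Proof.
move=> hm; rewrite /f /wprime !rev_cat !rev_nseq -catA keep_nseq_y keep_nseq_x //.
by rewrite rev_g count_rev count_cat count_nseq /= mul1n count_cat count_nseq /= mul0n add0n count_H.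
Qed.

Lemma arith q A x1 x2 : x1 < q -> x2 < q -> x1 != x2 -> 0 < q ->
  ((q - A %% q) + (q - x1) + A + x1) %% q = 0 /\ ((q - A %% q) + (q - x1) + A + x2) %% q != 0.
Proof. move=> h1 h2 h3 h4. have hA := divn_eq A q; have hE := ltn_pmod A h4.
move: hA hE; set D := A %/ q; set E := A %% q => hA hE.
split.
  have -> : q - E + (q - x1) + A + x1 = (D + 2) * q by lia.
  by rewrite modnMl.
have -> : q - E + (q - x1) + A + x2 = (D + 1) * q + (q - x1 + x2) by lia.
rewrite modnMDl.
case: (ltngtP x1 x2) => hx; last by rewrite hx eqxx in h3.
  have -> : q - x1 + x2 = q + (x2 - x1) by lia.
  rewrite modnDl modn_small; lia.
rewrite modn_small; lia.
Qed.

Lemma first_diff (a b : seq nat) : size a = size b -> a != b ->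
  exists p, [/\ p < size a, take p a = take p b & nth 0 a p != nth 0 b p].
Proof.
elim: a b => [|x a IH] [|y b] //= [hs] hne.
case: (eqVneq x y) => hxy.
  subst y. have hab : a != b by apply: contraNneq hne => ->.
  have [p [hp ht hn]] := IH b hs hab.
  by exists p.+1; rewrite /= ht.
by exists 0; rewrite !take0.
Qed.

Theorem lemma3 (n q : nat) (hn : 0 < n) (hq : 0 < q)
  (k1 k2 : n.-tuple 'I_q) :
  k1 != k2 ->
  exists w : word, f n q (g k1 ++ w) = 0 /\ f n q (g k2 ++ w) != 0.
Proof.
move=> hk.
set s1 := rev (map val k1); set s2 := rev (map val k2).
have hs1 : size s1 = n by rewrite size_rev size_map size_tuple.
have hs2 : size s2 = n by rewrite size_rev size_map size_tuple.
have hne : s1 != s2.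
  apply: contraNneq hk => h; apply/eqP/val_inj/(inj_map val_inj).
  by rewrite -(revK (map val k1)) -/s1 h revK.
have [p [hp ht hd]] := @first_diff s1 s2 (etrans hs1 (esym hs2)) hne.
rewrite hs1 in hp.
have lt1 : forall (k : n.-tuple 'I_q) i, i < n -> nth 0 (rev (map val k)) i < q.
  move=> k i hi.
  have : nth 0 (rev (map val k)) i \in rev (map val k).
    by rewrite mem_nth // size_rev size_map size_tuple.
  by rewrite mem_rev => /mapP [j _ ->]; apply: ltn_ord.
set A := sumn (take p s1).
set x1 := nth 0 s1 p; set x2 := nth 0 s2 p.
have [e1 e2] := @arith q A _ _ (lt1 k1 p hp) (lt1 k2 p hp) hd hq.
exists (nseq (n - p) lx ++ nseq ((q - A %% q) + (q - x1)) ly).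
have hnp : n - (n - p) = p by rewrite subKn // ltnW.
rewrite !f_formula ?leq_subr // hnp -/s1 -/s2.
rewrite (take_nth 0 (s:=s1)) ?hs1 // (take_nth 0 (s:=s2)) ?hs2 // !sumn_rcons -ht -/A !addnA.
by split.
Qed.
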